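(* Let $\kappa_3,\kappa_4$ be constants and let $y$ be a $C^3$ function on an open interval of $r>0$ on which $\kappa_3r^2+\kappa_4\neq 0$. Then $y$ satisfies the third-order equation $$(\kappa_3r^2+\kappa_4)r^3y'''+(\kappa_3r^2-2\kappa_4)r^2y''-(\kappa_3r^2+2\kappa_4)ry'+8\kappa_4y=8$$ if and only if there exists a constant $\kappa_2$ such that $y$ satisfies the second-order equation $$(\kappa_3r^2+\kappa_4)y''+\kappa_3ry'-\frac{2\kappa_4}{r^2}y+\frac{2}{r^2}=2\kappa_2r^2 .$$
   Context: Primes denote derivatives with respect to $r$. (In the paper, $y=b^2$ is the metric function of a static spherically symmetric vacuum solution of conformal Killing gravity, the second-order equation arises from the conformal Killing parametrization and the third-order one from Harada's original field equations.) *)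

(* Defs.v *)
From Stdlib Require Import Reals.
From Coquelicot Require Import Coquelicot.
Open Scope R_scope.

Definition in_interval (a b : Rbar) (r : R) : Prop :=
  Rbar_lt a r /\ Rbar_lt r b.

Definition C3_on (a b : Rbar) (y : R -> R) : Prop :=
  forall r, in_interval a b r ->
    ex_derive_n y 1 r /\ ex_derive_n y 2 r /\ ex_derive_n y 3 r /\
    continuous (Derive_n y 3) r.

Definition third_order_eq (k3 k4 : R) (y : R -> R) (r : R) : Prop :=
  (k3 * r ^ 2 + k4) * r ^ 3 * Derive_n y 3 r
  + (k3 * r ^ 2 - 2 * k4) * r ^ 2 * Derive_n y 2 r
  - (k3 * r ^ 2 + 2 * k4) * r * Derive_n y 1 r
  + 8 * k4 * y r = 8.

Definition second_order_eq (k2 k3 k4 : R) (y : R -> R) (r : R) : Prop :=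
  (k3 * r ^ 2 + k4) * Derive_n y 2 r + k3 * r * Derive_n y 1 r
  - 2 * k4 / r ^ 2 * y r + 2 / r ^ 2 = 2 * k2 * r ^ 2.

(* Main.v *)
Require Import Defs.
From Stdlib Require Import Reals Lra Classical.
From Coquelicot Require Import Coquelicot.
Open Scope R_scope.

Definition gS k3 k4 (y : R -> R) r :=
  ((k3 * r ^ 2 + k4) * Derive_n y 2 r + k3 * r * Derive_n y 1 r
  - 2 * k4 / r ^ 2 * y r + 2 / r ^ 2) / r ^ 2.

Lemma key k3 k4 y r : 0 < r -> ex_derive_n y 1 r -> ex_derive_n y 2 r -> ex_derive_n y 3 r ->
  is_derive (gS k3 k4 y) r
   (((k3 * r ^ 2 + k4) * r ^ 3 * Derive_n y 3 r
  + (k3 * r ^ 2 - 2 * k4) * r ^ 2 * Derive_n y 2 r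
  - (k3 * r ^ 2 + 2 * k4) * r * Derive_n y 1 r
  + 8 * k4 * y r - 8) / r ^ 5).
Proof.
  intros Hr H1 H2 H3. simpl in H1, H2, H3. unfold gS.
  auto_derive.
  - repeat split; try exact H1; try exact H2; try exact H3; try lra; try (apply Rmult_integral_contrapositive; split; lra).
  - change (Derive_n y 3 r) with (Derive (fun x : R => Derive (fun x0 : R => Derive (fun x1 : R => y x1) x0) x) r).
    change (Derive_n y 2 r) with (Derive (fun x : R => Derive (fun x0 : R => y x0) x) r).
    change (Derive_n y 1 r) with (Derive (fun x : R => y x) r).
    set (d3 := Derive (fun x : R => Derive (fun x0 : R => Derive (fun x1 : R => y x1) x0) x) r).
    set (d2 := Derive (fun x : R => Derive (fun x0 : R => y x0) x) r).
    set (d1 := Derive (fun x : R => y x) r).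
    field. lra.
Qed.

Lemma pos a b r : Rbar_le (Finite 0) a -> in_interval a b r -> 0 < r.
Proof. intros H [H1 _]. exact (Rbar_le_lt_trans _ _ _ H H1). Qed.

Theorem proposition7 (k3 k4 : R) (a b : Rbar) (y : R -> R)
  (Ha0 : Rbar_le (Finite 0) a) (Hab : Rbar_lt a b)
  (Hy : C3_on a b y)
  (Hnz : forall r, in_interval a b r -> k3 * r ^ 2 + k4 <> 0) :
  (forall r, in_interval a b r -> third_order_eq k3 k4 y r) <->
  (exists k2 : R, forall r, in_interval a b r -> second_order_eq k2 k3 k4 y r).
Proof.
  assert (Hk : forall r, in_interval a b r -> is_derive (gS k3 k4 y) r
   (((k3 * r ^ 2 + k4) * r ^ 3 * Derive_n y 3 r
  + (k3 * r ^ 2 - 2 * k4) * r ^ 2 * Derive_n y 2 r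
  - (k3 * r ^ 2 + 2 * k4) * r * Derive_n y 1 r
  + 8 * k4 * y r - 8) / r ^ 5)).
  { intros r Hr. destruct (Hy r Hr) as [H1 [H2 [H3 _]]].
    apply key; auto. exact (pos a b r Ha0 Hr). }
  split.
  - intros H3.
    destruct (classic (exists r0, in_interval a b r0)) as [[r0 Hr0]|Hn].
    2:{ exists 0. intros r Hr. exfalso. apply Hn. exists r. exact Hr. }
    assert (Hc : forall u v, in_interval a b u -> in_interval a b v -> u < v ->
               gS k3 k4 y u = gS k3 k4 y v).
    { intros u v [Hu1 Hu2] [Hv1 Hv2] Huv. apply eq_is_derive; [|exact Huv].
      intros t Ht.
      assert (Htin : in_interval a b t).
      { split.
        - apply Rbar_lt_le_trans with u; [exact Hu1| simpl; lra].
        - apply Rbar_le_lt_trans with v; [simpl; lra| exact Hv2]. }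
      pose proof (Hk t Htin) as D. pose proof (H3 t Htin) as E.
      unfold third_order_eq in E. rewrite E in D.
      replace ((8 - 8) / t ^ 5) with (@zero R_NormedModule) in D.
      exact D. simpl. unfold zero. simpl. field.
      pose proof (pos a b t Ha0 Htin). lra. }
    exists (gS k3 k4 y r0 / 2). intros r Hr.
    assert (Heq : gS k3 k4 y r = gS k3 k4 y r0).
    { destruct (Rtotal_order r r0) as [Hl|[He|Hg]].
      - apply Hc; auto.
      - subst; reflexivity.
      - symmetry; apply Hc; auto. }
    rewrite <- Heq. unfold second_order_eq, gS.
    pose proof (pos a b r Ha0 Hr). field. lra.
  - intros [k2 H2] r Hr.
    pose proof (pos a b r Ha0 Hr) as Hp.
    assert (Hl : locally r (fun t => 2 * k2 = gS k3 k4 y t)).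
    { destruct Hr as [Hr1 Hr2]. apply (locally_interval _ r a b Hr1 Hr2).
      intros t Ht1 Ht2. assert (Ht : in_interval a b t) by (split; auto).
      pose proof (H2 t Ht) as E. unfold second_order_eq in E. unfold gS.
      pose proof (pos a b t Ha0 Ht). rewrite E. field. lra. }
    pose proof (is_derive_ext_loc _ _ r _ Hl (is_derive_const (2 * k2) r)) as D0.
    pose proof (Hk r Hr) as D1.
    apply is_derive_unique in D0. apply is_derive_unique in D1.
    rewrite D0 in D1. simpl in D1. unfold zero in D1; simpl in D1.
    unfold third_order_eq.
    assert (Hr5 : r ^ 5 <> 0) by (apply pow_nonzero; lra).
    set (L := (k3 * r ^ 2 + k4) * r ^ 3 * Derive_n y 3 r + (k3 * r ^ 2 - 2 * k4) * r ^ 2 * Derive_n y 2 r -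
      (k3 * r ^ 2 + 2 * k4) * r * Derive_n y 1 r + 8 * k4 * y r) in *.
    assert (L - 8 = 0).
    { apply (Rmult_eq_reg_r (/ r ^ 5)). rewrite Rmult_0_l. exact (eq_sym D1).
      apply Rinv_neq_0_compat; exact Hr5. }
    lra.
Qed.
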